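(* For each type $X$ in the list below, the determinant of the quantum affine Cartan matrix of type $X$ is $$\det C_{\mathrm{aff}}(t)=\frac{(1-t^{2p})(1-t^{2q})(1-t^{2r})}{1-t^2},$$ where $(p,q,r)$ is given by: $\mathsf A_l$ ($l\ge0$): $(\tfrac12(l+1),\tfrac12(l+1),1)$; $\mathsf D_l$ ($l\ge4$): $(l-2,2,2)$; $\mathsf E_6$: $(3,3,2)$; $\mathsf E_7$: $(4,3,2)$; $\mathsf E_8$: $(5,3,2)$; $\mathsf C_l$ ($l\ge2$): $(l,1,1)$; $\mathsf B_l$ ($l\ge3$): $(l-1,2,1)$; $\mathsf F_4$: $(3,2,1)$; $\mathsf G_2$: $(2,1,1)$.
   Context: For a type $X$ of rank $l$, let $C_{\mathrm{aff}}$ be the $(l+1)\times(l+1)$ affine (untwisted, i.e. of type $X^{(1)}$) generalized Cartan matrix; for $\mathsf A_l$ with $l\ge2$ this is the Cartan matrix of a cycle with $l+1$ vertices, and for $\mathsf A_1$ it is $\begin{pmatrix}2&-2\\-2&2\end{pmatrix}$. The quantum affine Cartan matrix $C_{\mathrm{aff}}(t)$ is obtained from $C_{\mathrm{aff}}$ by replacing each diagonal entry $2$ by $1+t^2$ and multiplying each off-diagonal entry by $t$, i.e. $C_{\mathrm{aff}}(t)=(1-t)^2\mathbf 1+tC_{\mathrm{aff}}$; for type $\mathsf A_0$ one sets $C_{\mathrm{aff}}(t)=((1-t)^2)$. *)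

(* Defs.v *)
From mathcomp Require Import all_boot all_order all_algebra.
Set Implicit Arguments.
Unset Strict Implicit.
Unset Printing Implicit Defensive.
Import GRing.Theory.
Local Open Scope ring_scope.

(** Finite types X (the affine type is the untwisted X^(1)). *)
Inductive ctype : Type :=
| TA of nat | TD of nat | TE6 | TE7 | TE8 | TC of nat | TB of nat | TF4 | TG2.

Definition admissible (X : ctype) : bool :=
  match X with
  | TA _ => true
  | TD l => (4 <= l)%N
  | TC l => (2 <= l)%N
  | TB l => (3 <= l)%N
  | _ => true
  end.

Definition rank (X : ctype) : nat :=
  match X with
  | TA l | TD l | TC l | TB l => l
  | TE6 => 6 | TE7 => 7 | TE8 => 8 | TF4 => 4 | TG2 => 2
  end.

(** Edges of the affine Dynkin diagram (vertices 0..rank X, 0 = affine node,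
    Bourbaki numbering of the finite part).  An edge (i, j, a, b) contributes
    a_{ij} = a and a_{ji} = b, with a_{ij} = <alpha_i^vee, alpha_j>. *)
Definition simple_edge (i j : nat) : nat * nat * int * int := (i, j, -1, -1).

Definition aff_edges (X : ctype) : seq (nat * nat * int * int) :=
  match X with
  | TA l => (* cycle on l+1 vertices; for l = 1 the two edges 0-1, 1-0 give
               the entries -2; for l = 0 the loop 0-0 gives the entry 0 *)
      [seq simple_edge i (i.+1 %% l.+1) | i <- iota 0 l.+1]
  | TD l => simple_edge 0 2 :: [seq simple_edge i i.+1 | i <- iota 1 (l - 2)]
              ++ [:: simple_edge (l - 2) l]
  | TE6 => [seq simple_edge e.1 e.2 | e <- [:: (0,2); (2,4); (1,3); (3,4); (4,5); (5,6)]%N]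
  | TE7 => [seq simple_edge e.1 e.2 |
             e <- [:: (0,1); (1,3); (3,4); (4,5); (5,6); (6,7); (2,4)]%N]
  | TE8 => [seq simple_edge e.1 e.2 |
             e <- [:: (1,3); (3,4); (4,5); (5,6); (6,7); (7,8); (2,4); (8,0)]%N]
  | TC l => (* 0 and l long, 1..l-1 short *)
      (0%N, 1%N, -1, -2) :: [seq simple_edge i i.+1 | i <- iota 1 (l - 2)]
        ++ [:: ((l - 1)%N, l, -2, -1)]
  | TB l => (* l short, others long *)
      simple_edge 0 2 :: [seq simple_edge i i.+1 | i <- iota 1 (l - 2)]
        ++ [:: ((l - 1)%N, l, -1, -2)]
  | TF4 => [:: simple_edge 0 1; simple_edge 1 2; (2%N, 3%N, -1, -2); simple_edge 3 4]
  | TG2 => (* alpha_1 short, alpha_2 and alpha_0 long *)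
      [:: simple_edge 0 2; (1%N, 2%N, -3, -1)]
  end.

Definition aff_entry (X : ctype) (i j : nat) : int :=
  (if i == j then 2 else 0) +
  \sum_(e <- aff_edges X)
     ((if (e.1.1.1 == i) && (e.1.1.2 == j) then e.1.2 else 0) +
      (if (e.1.1.2 == i) && (e.1.1.1 == j) then e.2 else 0)).

Definition Caff (X : ctype) : 'M[int]_((rank X).+1) :=
  \matrix_(i, j) aff_entry X i j.

Definition qCaff (X : ctype) : 'M[{poly int}]_((rank X).+1) :=
  ((1 - 'X) ^+ 2)%:M + 'X *: map_mx (fun z : int => z%:~R%:P) (Caff X).

(** Doubled exponents (2p, 2q, 2r). *)
Definition pqr2 (X : ctype) : nat * nat * nat :=
  match X with
  | TA l => (l.+1, l.+1, 2)
  | TD l => (2 * (l - 2), 4, 4)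
  | TE6 => (6, 6, 4)
  | TE7 => (8, 6, 4)
  | TE8 => (10, 6, 4)
  | TC l => (2 * l, 2, 2)
  | TB l => (2 * (l - 1), 4, 2)
  | TF4 => (6, 4, 2)
  | TG2 => (4, 2, 2)
  end%N.

(* Main.v *)
Require Import Defs.
From mathcomp Require Import all_boot all_order all_algebra.
From mathcomp Require Import fingroup perm ring lra zify.
Set Implicit Arguments. Unset Strict Implicit. Unset Printing Implicit Defensive.
Import GRing.Theory.
Local Open Scope ring_scope.

Definition Ent (c : nat -> nat -> int) (i j : nat) : {poly int} :=
  (if i == j then (1 - 'X) ^+ 2 else 0) + 'X * (c i j)%:~R%:P.
Definition Dq n c := \det (\matrix_(i < n, j < n) Ent c i j).
Definition rm k (c : nat -> nat -> int) := fun i j => c (bump k i) (bump k j).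

Lemma Dq_ext n c c' : (forall i j, (i < n)%N -> (j < n)%N -> c i j = c' i j) ->
  Dq n c = Dq n c'.
Proof.
move=> H; rewrite /Dq; congr (\det _); apply/matrixP => i j; rewrite !mxE.
by rewrite /Ent H.
Qed.

Lemma Dq0 c : Dq 0 c = 1.
Proof. exact: det_mx00. Qed.

Lemma Ent_rm k c i j : Ent (rm k c) i j = Ent c (bump k i) (bump k j).
Proof.
rewrite /Ent /rm; congr (_ + _).
suff -> : (bump k i == bump k j) = (i == j) by [].
rewrite /bump; case: (leqP k i); case: (leqP k j) => /= ? ?; apply/eqP/eqP; lia.
Qed.

Lemma leaf n (c : nat -> nat -> int) (k : nat) :
  (0 < k < n.+2)%N ->
  (forall j, (j < n.+2)%N -> j != 0%N -> j != k -> c 0%N j = 0 /\ c j 0%N = 0) ->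
  Dq n.+2 c = Ent c 0 0 * Dq n.+1 (rm 0 c)
     - 'X ^+ 2 * (c 0%N k * c k 0%N)%:~R%:P * Dq n (rm k.-1 (rm 0 c)).
Proof.
move=> /andP[k0 kn] H.
rewrite /Dq (expand_det_row _ ord0).
rewrite (bigD1 ord0) //= (bigD1 (Ordinal kn)) /=; last by rewrite -val_eqE /= -lt0n.
rewrite big1 ?addr0; last first.
  move=> j /andP[j0 jk]; rewrite mxE /Ent /=.
  have [-> _] := H j (ltn_ord j) j0 jk.
  rewrite -val_eqE /= in j0.
  by rewrite eq_sym (negbTE j0) mulr0z polyC0 !mulr0 addr0 mul0r.
rewrite !mxE /cofactor /= expr0 mul1r.
set M := \matrix_(i, j) Ent c i j.
have h1 : row' ord0 (col' ord0 M) = \matrix_(i, j) Ent (rm 0 c) i j.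
  by apply/matrixP => i j; rewrite !mxE.
have kn' : (k.-1 < n.+1)%N by rewrite prednK.
have h2 : \det (row' ord0 (col' (Ordinal kn) M)) = (-1) ^+ k.-1 * Ent c k 0 * \det (\matrix_(i < n, j < n) Ent (rm k.-1 (rm 0 c)) i j).
  rewrite (expand_det_col _ ord0) (bigD1 (Ordinal kn')) //= big1 ?addr0; last first.
    move=> i ik; rewrite !mxE /=.
    have b0 : bump k 0 = 0%N by rewrite /bump leqNgt k0.
    have bi : bump 0 i = i.+1 by rewrite /bump leq0n add1n.
    rewrite b0 bi /Ent /=.
    have Hi : i.+1 != k by rewrite -val_eqE /= in ik; apply: contra ik => /eqP <-.
    have Hl : (i.+1 < n.+2)%N by rewrite ltnS ltn_ord.
    case: (H i.+1 Hl isT Hi) => _ ->.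
    by rewrite mulr0z polyC0 mulr0 addr0 mul0r.
  rewrite /cofactor !mxE /= addn0.
  have -> : bump 0 k.-1 = k by rewrite /bump leq0n add1n prednK.
  have -> : bump k 0 = 0%N by rewrite /bump leqNgt k0.
  rewrite mulrCA mulrA; congr (_ * _ * \det _).
  apply/matrixP => i j; rewrite !mxE Ent_rm Ent_rm /=.
  have -> : bump k (bump 0 j) = bump 0 (bump k.-1 j).
    rewrite /bump; case: (leqP k.-1 j); rewrite leq0n /=; case: (leqP k j.+1) => /= ? ?; lia.
  by [].
rewrite h1 h2 add0n.
have -> : (-1)^+k = - (-1)^+k.-1 :> {poly int} by rewrite -{1}(prednK k0) exprS mulN1r.
have -> : forall (B e C D : {poly int}), B * (- e * (e * C * D)) = - ((e * e) * (B * C * D)) by move=> *; ring.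
rewrite -exprMn mulrNN mulr1 expr1n mul1r.
have e1 : Ent c 0 k = 'X * (c 0%N k)%:~R%:P by rewrite /Ent eq_sym eqn0Ngt k0 add0r.
have e2 : Ent c k 0 = 'X * (c k 0%N)%:~R%:P by rewrite /Ent eqn0Ngt k0 add0r.
rewrite e1 e2 intrM polyCM; ring.
Qed.

Lemma Dq_perm n c (f : nat -> nat) (s : 'S_n) :
  (forall i : 'I_n, val (s i) = f i) ->
  Dq n (fun i j => c (f i) (f j)) = Dq n c.
Proof.
move=> sf; rewrite /Dq.
have -> : \matrix_(i < n, j < n) Ent (fun i0 j0 => c (f i0) (f j0)) i j =
   row_perm s (col_perm s (\matrix_(i < n, j < n) Ent c i j)).
  apply/matrixP => i j; rewrite !mxE /Ent -!sf.
  have -> : (nat_of_ord (s i) == nat_of_ord (s j)) = (nat_of_ord i == nat_of_ord j).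
    by rewrite (inj_eq val_inj) (inj_eq perm_inj) -(inj_eq val_inj).
  by [].
rewrite row_permE col_permE !det_mulmx !det_perm odd_permV.
by rewrite mulrCA -expr2 sqrr_sign mulr1.
Qed.

Definition sw01 (i : nat) : nat := if i == 0%N then 1%N else if i == 1%N then 0%N else i.

Lemma Dq_sw n c : Dq n.+2 c = Dq n.+2 (fun i j => c (sw01 i) (sw01 j)).
Proof.
symmetry; have h1 : (1 < n.+2)%N by [].
apply: (@Dq_perm _ c _ (tperm ord0 (Ordinal h1))).
move=> i; rewrite /sw01; case: tpermP => [->|->|/eqP ne0 /eqP ne1] //=.
by rewrite -!val_eqE /= in ne0 ne1; rewrite (negbTE ne0) (negbTE ne1).
Qed.

Inductive pe := PC of int | PX | PE of int | PSub of pe & pe | PMul of pe & pe.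
Fixpoint interp (e : pe) : {poly int} :=
  match e with
  | PC z => z%:~R
  | PX => 'X
  | PE z => (1 - 'X) ^+ 2 + 'X * z%:~R
  | PSub a b => interp a - interp b
  | PMul a b => interp a * interp b
  end.

Definition leafchk n (c : nat -> nat -> int) (k : nat) : bool :=
  (0 < k < n.+2)%N &&
  all (fun j => (j == 0%N) || (j == k) || ((c 0%N j == 0) && (c j 0%N == 0))) (iota 0 n.+2).

Definition findk n (c : nat -> nat -> int) : nat :=
  head 1%N [seq j <- iota 1 n.+1 | (c 0%N j != 0) || (c j 0%N != 0)].

Definition swc (c : nat -> nat -> int) := fun i j => c (sw01 i) (sw01 j).

Definition go1 (f : nat -> (nat -> nat -> int) -> option pe) n' (c : nat -> nat -> int) :=
  let k := findk n' c in
  if leafchk n' c k then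
    match f n'.+1 (rm 0 c), f n' (rm k.-1 (rm 0 c)) with
    | Some d1, Some d2 =>
       Some (PSub (PMul (PE (c 0%N 0%N)) d1)
                  (PMul (PMul (PMul PX PX) (PC (c 0%N k * c k 0%N))) d2))
    | _, _ => None
    end
  else None.

Fixpoint tdet (fuel n : nat) (c : nat -> nat -> int) : option pe :=
  match fuel with
  | 0 => None
  | fuel'.+1 =>
    match n with
    | 0 => Some (PC 1)
    | 1 => Some (PE (c 0%N 0%N))
    | n'.+2 =>
      match go1 (tdet fuel') n' c with Some e => Some e | None => go1 (tdet fuel') n' (swc c) end
    end
  end.

Lemma go1_sound f n' c e :
  (forall m c' e', f m c' = Some e' -> Dq m c' = interp e') ->
  go1 f n' c = Some e -> Dq n'.+2 c = interp e.
Proof.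
move=> Hf; rewrite /go1.
case: ifP => // /andP[kb /allP Ha].
case E1: (f _ _) => [d1|] //; case E2: (f _ _) => [d2|] // [<-].
rewrite (@leaf n' c (findk n' c)) //; last first.
  move=> j jn j0 jk; have := Ha j; rewrite mem_iota add0n jn /= (negbTE j0) (negbTE jk) /=.
  by move=> /(_ isT) /andP[/eqP -> /eqP ->].
rewrite (Hf _ _ _ E1) (Hf _ _ _ E2) /= /Ent /=.
by rewrite !rmorph_int expr2.
Qed.

Lemma tdet_sound fuel n c e : tdet fuel n c = Some e -> Dq n c = interp e.
Proof.
elim: fuel n c e => [|fuel IH] n c e //=.
case: n => [|[|n']].
- by move=> [<-]; rewrite Dq0.
- move=> [<-]; rewrite /Dq det_mx11 mxE /Ent /= rmorph_int //.
case E: (go1 _ _ _) => [e'|].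
  by move=> [<-]; exact: (go1_sound IH E).
move=> E'; rewrite Dq_sw; exact: (go1_sound IH E').
Qed.

Definition ce (es : seq (nat * nat * int * int)) (i j : nat) : int :=
  (if i == j then 2 else 0) +
  foldr (fun e acc => (if (e.1.1.1 == i) && (e.1.1.2 == j) then e.1.2 else 0) +
      (if (e.1.1.2 == i) && (e.1.1.1 == j) then e.2 else 0) + acc) 0 es.

Lemma aff_ce X i j : aff_entry X i j = ce (aff_edges X) i j.
Proof.
rewrite /aff_entry /ce; congr (_ + _).
elim: (aff_edges X) => [|e es IH]; first by rewrite big_nil.
by rewrite big_cons IH.
Qed.

Lemma qCaff_Dq X : \det (qCaff X) = Dq (rank X).+1 (ce (aff_edges X)).
Proof.
rewrite /Dq /qCaff; congr (\det _); apply/matrixP => i j.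
rewrite !mxE /Ent -aff_ce.
case: eqP => [->|ne]; first by rewrite eqxx mulr1n.
rewrite (_ : (nat_of_ord i == j) = false) ?mulr0n //.
by apply/negbTE/eqP => /val_inj.
Qed.

Ltac tdet_rw n c :=
  let r := eval vm_compute in (tdet 100 n c) in
  match r with Some ?e =>
    have -> : Dq n c = interp e by apply: (@tdet_sound 100 n c e); vm_compute; reflexivity
  end.

Definition sh (c : nat -> nat -> int) j := fun a b => c (a + j)%N (b + j)%N.

Lemma step N c j : (j.+2 <= N)%N -> c j j = 2 ->
  (forall x, (j.+2 <= x < N)%N -> c j x = 0 /\ c x j = 0) ->
  Dq (N - j) (sh c j) = (1 + 'X^2) * Dq (N - j.+1) (sh c j.+1)
     - 'X^2 * (c j j.+1 * c j.+1 j)%:~R%:P * Dq (N - j.+2) (sh c j.+2).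
Proof.
move=> jN cjj H.
have -> : (N - j = (N - j.+2).+2)%N by lia.
have -> : (N - j.+1 = (N - j.+2).+1)%N by lia.
rewrite (@leaf _ _ 1) //; last first.
  move=> x xN x0 x1; rewrite /sh /=; apply: H; lia.
congr (_ * _ - _ * _ * _).
all: try by apply: Dq_ext => a b _ _; rewrite /rm /sh /bump /= ?add1n ?addnS.
by rewrite /Ent /sh /= cjj rmorph_int; ring.
Qed.

Fixpoint Pf (n : nat) : {poly int} :=
  match n with
  | 0 => 0
  | n'.+1 => match n' with 0 => 1 | n''.+1 => (1 + 'X^2) * Pf n' - 'X^2 * Pf n'' end
  end.

Lemma Pf_mul n : Pf n * (1 - 'X^2) = 1 - ('X^2) ^+ n.
Proof.
elim: n {-2}n (leqnn n) => [|n IH] [|[|k]] //= kn; rewrite ?expr0 ?subrr ?mul0r ?mul1r ?expr1 //.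
have h1 := IH k.+1 kn; have h2 := IH k (ltnW kn).
rewrite mulrBl -!mulrA h1 h2 !exprS; ring.
Qed.

Lemma path_mul (G : nat -> {poly int}) s m :
  (forall j, (s <= j < s + m)%N -> G j = (1 + 'X^2) * G j.+1 - 'X^2 * G j.+2) ->
  G s * (1 - 'X^2) = (1 - ('X^2) ^+ m.+1) * G (s + m)%N - 'X^2 * (1 - ('X^2) ^+ m) * G (s + m).+1.
Proof.
move=> H.
suff: G s = Pf m.+1 * G (s + m)%N - 'X^2 * Pf m * G (s + m).+1.
  move=> ->; rewrite -Pf_mul -(Pf_mul m); ring.
elim: m H => [|m IH] H; first by rewrite addn0 /=; ring.
rewrite IH; last by move=> j /andP[a b]; apply: H; rewrite a /=; lia.
rewrite (H (s + m)%N); last lia.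
rewrite addnS /=; ring.
Qed.

Definition fs (es : seq (nat * nat * int * int)) (i j : nat) : int :=
  foldr (fun e acc => (if (e.1.1.1 == i) && (e.1.1.2 == j) then e.1.2 else 0) +
      (if (e.1.1.2 == i) && (e.1.1.1 == j) then e.2 else 0) + acc) 0 es.

Lemma ce_fs es i j : ce es i j = (if i == j then 2 else 0) + fs es i j.
Proof. by []. Qed.

Lemma fs_cons e es i j : fs (e :: es) i j =
  (if (e.1.1.1 == i) && (e.1.1.2 == j) then e.1.2 else 0) +
      (if (e.1.1.2 == i) && (e.1.1.1 == j) then e.2 else 0) + fs es i j.
Proof. by []. Qed.

Lemma fs_nil i j : fs [::] i j = 0.
Proof. by []. Qed.

Lemma fs_cat es1 es2 i j : fs (es1 ++ es2) i j = fs es1 i j + fs es2 i j.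
Proof.
elim: es1 => [|e es IH] /=; first by rewrite add0r.
by rewrite /fs /= -/(fs _ _ _) IH addrA.
Qed.

Lemma fs_iota a m i j :
  fs [seq simple_edge k k.+1 | k <- iota a m] i j =
  (if (a <= i < a + m)%N && (j == i.+1) then -1 else 0) +
  (if (a <= j < a + m)%N && (i == j.+1) then -1 else 0).
Proof.
elim: m a => [|m IH] a.
  rewrite /= addn0; case: ifP => ?; case: ifP => ?; rewrite /fs /=; lia.
rewrite (_ : iota a m.+1 = a :: iota a.+1 m) // map_cons fs_cons IH /simple_edge /=.
repeat (case: ifP => ?); lia.
Qed.

Ltac csolve := rewrite ?ce_fs ?(fs_cons, fs_cat, fs_iota, fs_nil) /simple_edge /=;
  repeat (case: ifP => ?); lia.

Lemma test2 l j : (1 <= j)%N -> (j.+2 <= l)%N -> ce (aff_edges (TC l)) j j.+1 = -1.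
Proof. move=> *; rewrite /aff_edges; csolve. Qed.

Lemma Dq1 c : Dq 1 c = (1 - 'X) ^+ 2 + 'X * (c 0%N 0%N)%:~R.
Proof. by rewrite /Dq det_mx11 mxE /Ent /= rmorph_int. Qed.

Lemma Dq_sh0 n c : Dq n (sh c 0) = Dq n c.
Proof. by apply: Dq_ext => a b _ _; rewrite /sh !addn0. Qed.

Lemma famC l : (2 <= l)%N ->
  Dq l.+1 (ce (aff_edges (TC l))) * (1 - 'X^2) =
  (1 - 'X^(2 * l)) * (1 - 'X^2) * (1 - 'X^2).
Proof.
case: l => [|[|[|m]]] // _.
  tdet_rw 3%N (ce (aff_edges (TC 2))); rewrite /=; ring.
set l := m.+3.
set c := ce (aff_edges (TC l)).
have F1 : forall j, (j <= l)%N -> c j j = 2 by move=> j jl; rewrite /c /aff_edges; csolve.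
have F2 : forall j x, (j.+2 <= x <= l)%N -> c j x = 0 /\ c x j = 0.
  by move=> j x jx; split; rewrite /c /aff_edges; csolve.
have F3 : c 0%N 1%N * c 1%N 0%N = 2.
  have -> : c 0%N 1%N = -1 by rewrite /c /aff_edges; csolve.
  by have -> : c 1%N 0%N = -2 by rewrite /c /aff_edges; csolve.
have F4 : forall j, (1 <= j)%N -> (j.+2 <= l)%N -> c j j.+1 * c j.+1 j = 1.
  move=> j j1 j2; have -> : c j j.+1 = -1 by rewrite /c /aff_edges; csolve.
  by have -> : c j.+1 j = -1 by rewrite /c /aff_edges; csolve.
have F5 : c m.+2 m.+3 * c m.+3 m.+2 = 2.
  have -> : c m.+2 m.+3 = -2 by rewrite /c /aff_edges; csolve.
  by have -> : c m.+3 m.+2 = -1 by rewrite /c /aff_edges; csolve.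
set G := fun j => Dq (l.+1 - j) (sh c j).
have St : forall j, (j.+2 <= l.+1)%N ->
    G j = (1 + 'X^2) * G j.+1 - 'X^2 * (c j j.+1 * c j.+1 j)%:~R%:P * G j.+2.
  move=> j jl; rewrite /G step //; first by apply: F1; lia.
  move=> x xl; apply: F2; lia.
have G0 : Dq l.+1 c = G 0%N by rewrite /G subn0 Dq_sh0.
have Gl : G l = 1 + 'X^2 by rewrite /G subSnn Dq1 /sh /= F1 //; ring.
have Gl1 : G l.+1 = 1 by rewrite /G subnn Dq0.
have Glm1 : G m.+2 = (1 + 'X^2) * (1 + 'X^2) - 'X^2 * 2%:~R * 1.
  by rewrite St // F5 rmorph_int /= Gl Gl1.
have P1 := @path_mul G 1 m.+1.
have P2 := @path_mul G 2 m.
rewrite G0 St // F3 rmorph_int.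
have Hp : forall j, (1 <= j < 1 + m.+1)%N -> G j = (1 + 'X^2) * G j.+1 - 'X^2 * G j.+2.
  move=> j /andP[j1 j2]; rewrite St; last by rewrite /l; lia.
  by rewrite F4 ?rmorph_int ?mulr1 //; rewrite /l; lia.
have {}P1 := P1 Hp.
have {}P2 := P2 (fun j hj => Hp j (ltac:(move: hj; lia))).
have E : forall g1 g2 : {poly int}, ((1 + 'X^2) * g1 - 'X^2 * 2%:~R * g2) * (1 - 'X^2) =
   (1 + 'X^2) * (g1 * (1 - 'X^2)) - 'X^2 * 2%:~R * (g2 * (1 - 'X^2)) by move=> *; ring.
rewrite E P1 P2 add1n /= Glm1.
rewrite /l in Gl; rewrite Gl exprM !exprS.
ring.
Qed.

Lemma lowend l c : (3 <= l)%N ->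
  (forall j, (j <= l)%N -> c j j = 2) ->
  (forall j, (j <= l)%N -> j != 0%N -> j != 2%N -> c 0%N j = 0 /\ c j 0%N = 0) ->
  c 0%N 2%N * c 2%N 0%N = 1 ->
  (forall x, (3 <= x <= l)%N -> c 1%N x = 0 /\ c x 1%N = 0) ->
  Dq l.+1 c = (1 + 'X^2) * Dq (l.+1 - 1) (sh c 1) - 'X^2 * (1 + 'X^2) * Dq (l.+1 - 3) (sh c 3).
Proof.
move=> l3 F1 F2 F3 F4.
case: l l3 F1 F2 F4 => [|[|[|l']]] // _ F1 F2 F4.
rewrite (@leaf l'.+2 c 2) //.
rewrite F3 rmorph_int /= mulr1.
have -> : Ent c 0 0 = 1 + 'X^2 by rewrite /Ent /= F1 // rmorph_int; ring.
rewrite subn1 /=.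
have -> : Dq l'.+3 (rm 0 c) = Dq l'.+3 (sh c 1).
  by apply: Dq_ext => a b _ _; rewrite /rm /sh /bump /= !addn1.
rewrite (@leaf l' _ 1) //; last first.
  move=> j jl j0 j1; rewrite /rm /bump /=.
  have -> : (1 <= j)%N by lia.
  by rewrite /= !add1n; apply: F4; lia.
have -> : Ent (rm 1 (rm 0 c)) 0 0 = 1 + 'X^2 by rewrite /Ent /rm /bump /= F1 // rmorph_int; ring.
have -> : rm 1 (rm 0 c) 0%N 1%N = 0 by rewrite /rm /bump /=; case: (F4 3%N) => //.
rewrite mul0r rmorph0 mulr0 mul0r subr0.
have -> : (l'.+4 - 3 = l'.+1)%N by lia.
have -> : Dq l'.+1 (rm 0 (rm 1 (rm 0 c))) = Dq l'.+1 (sh c 3).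
  by apply: Dq_ext => a b _ _; rewrite /rm /sh /bump /= !add1n !addn3.
by rewrite mulrA.
Qed.

Lemma famB l : (3 <= l)%N ->
  Dq l.+1 (ce (aff_edges (TB l))) * (1 - 'X^2) =
  (1 - 'X^(2 * (l - 1))) * (1 - 'X^4) * (1 - 'X^2).
Proof.
case: l => [|[|[|[|m]]]] // _.
  tdet_rw 4%N (ce (aff_edges (TB 3))); rewrite /=; ring.
set l := m.+4.
set c := ce (aff_edges (TB l)).
have F1 : forall j, (j <= l)%N -> c j j = 2 by move=> j jl; rewrite /c /aff_edges; csolve.
have F2 : forall j x, (1 <= j)%N -> (j.+2 <= x <= l)%N -> c j x = 0 /\ c x j = 0.
  by move=> j x j1 jx; split; rewrite /c /aff_edges; csolve.
have F4 : forall j, (1 <= j)%N -> (j.+2 <= l)%N -> c j j.+1 * c j.+1 j = 1.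
  move=> j j1 j2; have -> : c j j.+1 = -1 by rewrite /c /aff_edges; csolve.
  by have -> : c j.+1 j = -1 by rewrite /c /aff_edges; csolve.
have F5 : c m.+3 m.+4 * c m.+4 m.+3 = 2.
  have -> : c m.+3 m.+4 = -1 by rewrite /c /aff_edges; csolve.
  by have -> : c m.+4 m.+3 = -2 by rewrite /c /aff_edges; csolve.
have L : Dq l.+1 c = (1 + 'X^2) * Dq (l.+1 - 1) (sh c 1) - 'X^2 * (1 + 'X^2) * Dq (l.+1 - 3) (sh c 3).
  apply: lowend => //.
  - by move=> j jl j0 j2; split; rewrite /c /aff_edges; csolve.
  - have -> : c 0%N 2%N = -1 by rewrite /c /aff_edges; csolve.
    by have -> : c 2%N 0%N = -1 by rewrite /c /aff_edges; csolve.
  - by move=> x xl; apply: F2.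
set G := fun j => Dq (l.+1 - j) (sh c j).
have St : forall j, (1 <= j)%N -> (j.+2 <= l.+1)%N ->
    G j = (1 + 'X^2) * G j.+1 - 'X^2 * (c j j.+1 * c j.+1 j)%:~R%:P * G j.+2.
  move=> j j1 jl; rewrite /G step //; first by apply: F1; lia.
  move=> x xl; apply: F2 => //; lia.
have Gl : G l = 1 + 'X^2 by rewrite /G subSnn Dq1 /sh /= F1 //; ring.
have Gl1 : G l.+1 = 1 by rewrite /G subnn Dq0.
have Glm1 : G m.+3 = (1 + 'X^2) * (1 + 'X^2) - 'X^2 * 2%:~R * 1.
  by rewrite St // F5 rmorph_int /= Gl Gl1.
have Hp : forall j, (1 <= j < 1 + m.+2)%N -> G j = (1 + 'X^2) * G j.+1 - 'X^2 * G j.+2.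
  move=> j /andP[j1 j2]; rewrite St //; last by rewrite /l; lia.
  by rewrite F4 ?rmorph_int ?mulr1 //; rewrite /l; lia.
have P1 := @path_mul G 1 m.+2 Hp.
have P2 := @path_mul G 2 m.+1 (fun j hj => Hp j (ltac:(move: hj; lia))).
have P3 := @path_mul G 3 m (fun j hj => Hp j (ltac:(move: hj; lia))).
rewrite L -/(G 1%N) -/(G 3%N).
have E : forall g1 g3 : {poly int}, ((1 + 'X^2) * g1 - 'X^2 * (1 + 'X^2) * g3) * (1 - 'X^2) =
   (1 + 'X^2) * (g1 * (1 - 'X^2)) - 'X^2 * (1 + 'X^2) * (g3 * (1 - 'X^2)) by move=> *; ring.
rewrite E P1 P3 add1n /= Glm1.
rewrite /l in Gl; rewrite Gl.
have -> : (m.+4 - 1 = m.+3)%N by lia.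
rewrite exprM !exprS.
ring.
Qed.

Lemma famD l : (4 <= l)%N ->
  Dq l.+1 (ce (aff_edges (TD l))) * (1 - 'X^2) =
  (1 - 'X^(2 * (l - 2))) * (1 - 'X^4) * (1 - 'X^4).
Proof.
case: l => [|[|[|[|[|m]]]]] // _.
  tdet_rw 5%N (ce (aff_edges (TD 4))); rewrite /=; ring.
set l := m.+4.+1.
set c := ce (aff_edges (TD l)).
have F1 : forall j, (j <= l)%N -> c j j = 2 by move=> j jl; rewrite /c /aff_edges; csolve.
have F2 : forall j x, (1 <= j)%N -> (j.+3 <= l)%N -> (j.+2 <= x <= l)%N -> c j x = 0 /\ c x j = 0.
  by move=> j x j1 j3 jx; split; rewrite /c /aff_edges; csolve.
have F4 : forall j, (1 <= j)%N -> (j.+2 <= l)%N -> c j j.+1 * c j.+1 j = 1.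
  move=> j j1 j2; have -> : c j j.+1 = -1 by rewrite /c /aff_edges; csolve.
  by have -> : c j.+1 j = -1 by rewrite /c /aff_edges; csolve.
have L : Dq l.+1 c = (1 + 'X^2) * Dq (l.+1 - 1) (sh c 1) - 'X^2 * (1 + 'X^2) * Dq (l.+1 - 3) (sh c 3).
  apply: lowend => //.
  - by move=> j jl j0 j2; split; rewrite /c /aff_edges; csolve.
  - have -> : c 0%N 2%N = -1 by rewrite /c /aff_edges; csolve.
    by have -> : c 2%N 0%N = -1 by rewrite /c /aff_edges; csolve.
  - by move=> x xl; apply: F2.
set G := fun j => Dq (l.+1 - j) (sh c j).
have St : forall j, (1 <= j)%N -> (j.+3 <= l)%N ->
    G j = (1 + 'X^2) * G j.+1 - 'X^2 * (c j j.+1 * c j.+1 j)%:~R%:P * G j.+2.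
  move=> j j1 jl; rewrite /G step //.
  all: try by rewrite /l; lia.
  all: try by apply: F1; rewrite /l; lia.
  move=> x xl; apply: F2 => //; rewrite /l; lia.
have Glm2 : G m.+3 = (1 + 'X^2) * ((1 + 'X^2) * (1 + 'X^2)) - 'X^2 * 1 * (1 + 'X^2) - 'X^2 * 1 * (1 + 'X^2).
  rewrite /G (_ : (l.+1 - m.+3 = 3)%N); last by rewrite /l; lia.
  rewrite (@Dq_ext 3 _ (ce [:: simple_edge 0 1; simple_edge 0 2])); last first.
    move=> a b; case: a => [|[|[|a]]] // _; case: b => [|[|[|b]]] // _; rewrite /sh /c /aff_edges; csolve.
  tdet_rw 3%N (ce [:: simple_edge 0 1; simple_edge 0 2]); rewrite /=; ring.
have Glm1 : G m.+4 = (1 + 'X^2) * (1 + 'X^2).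
  rewrite /G (_ : (l.+1 - m.+4 = 2)%N); last by rewrite /l; lia.
  rewrite (@Dq_ext 2 _ (ce [::])); last first.
    move=> a b; case: a => [|[|a]] // _; case: b => [|[|b]] // _; rewrite /sh /c /aff_edges; csolve.
  tdet_rw 2%N (ce [::]); rewrite /=; ring.
have Hp : forall j, (1 <= j < 1 + m.+2)%N -> G j = (1 + 'X^2) * G j.+1 - 'X^2 * G j.+2.
  move=> j /andP[j1 j2]; have jl : (j.+3 <= l)%N by rewrite /l; lia.
  by rewrite St // F4 ?rmorph_int ?mulr1 //; rewrite /l; lia.
have P1 := @path_mul G 1 m.+2 Hp.
have P3 := @path_mul G 3 m (fun j hj => Hp j (ltac:(move: hj; lia))).
rewrite L -/(G 1%N) -/(G 3%N).
have E : forall g1 g3 : {poly int}, ((1 + 'X^2) * g1 - 'X^2 * (1 + 'X^2) * g3) * (1 - 'X^2) =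
   (1 + 'X^2) * (g1 * (1 - 'X^2)) - 'X^2 * (1 + 'X^2) * (g3 * (1 - 'X^2)) by move=> *; ring.
rewrite E P1 P3 add1n /= Glm2 Glm1.
have -> : (m.+4.+1 - 2 = m.+3)%N by lia.
rewrite exprM !exprS.
ring.
Qed.

Lemma fs_iotaf (f : nat -> nat) a m i j :
  fs [seq simple_edge k (f k) | k <- iota a m] i j =
  (if (a <= i < a + m)%N && (j == f i) then -1 else 0) +
  (if (a <= j < a + m)%N && (i == f j) then -1 else 0).
Proof.
elim: m a => [|m IH] a.
  rewrite /= addn0; case: ifP => ?; case: ifP => ?; rewrite /fs /=; lia.
rewrite (_ : iota a m.+1 = a :: iota a.+1 m) // map_cons fs_cons IH /simple_edge /=.
case: (eqVneq a i) => [<-|ne]; case: (eqVneq a j) => [<-|ne'] /=;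
  repeat (case: ifP => ? /=); lia.
Qed.

Section CycA.
Variable N : nat.
Local Notation n := N.+1.
Definition sA : 'S_n := perm (@ordS_inj n).
Definition PA : 'M[{poly int}]_n := perm_mx sA.

Lemma sAE (i : 'I_n) : val (sA i) = (i.+1 %% n)%N.
Proof. by rewrite /sA permE. Qed.

Lemma A1 : \matrix_(i < n, j < n) Ent (ce (aff_edges (TA N))) i j =
  (1%:M - 'X *: PA) *m (1%:M - 'X *: PA^T).
Proof.
rewrite mulmxBl !mulmxBr !mul1mx.
rewrite mulmx1 -scalemxAl -scalemxAr scalerA.

rewrite /PA tr_perm_mx -perm_mxM mulgV perm_mx1.
apply/matrixP => i j; rewrite !mxE /Ent /ce /aff_edges.
rewrite -/(fs _ _ _) (fs_iotaf (fun k => k.+1 %% n)%N) /= -!sAE.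
rewrite !ltn_ord /= (inj_eq val_inj).
have -> : (sA^-1%g i == j) = (i == sA j).
  by apply/eqP/eqP => [<-|->]; rewrite ?permKV ?permK.
rewrite (_ : (sA i == j) = (val j == val (sA i))); last by rewrite eq_sym.
rewrite -!val_eqE /= rmorph_int.
case: (eqVneq i j) => [<-|ne].
  rewrite eqxx; case: (val i == val (sA i)); rewrite /= ?mulr1 ?mulr0; ring.
rewrite -val_eqE in ne; rewrite (negbTE ne).
case: (val j == val (sA i)); case: (val i == val (sA j));
  rewrite /= ?mulr1 ?mulr0; ring.
Qed.
Definition UA : 'M[{poly int}]_n := \matrix_(i < n, j < n) (if (i <= j)%N then 'X ^+ (j - i) else 0).

Lemma detUA : \det UA = 1.
Proof.
rewrite -det_tr det_trig; last first.
  by apply/is_trig_mxP => i j ij; rewrite !mxE leqNgt ij.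
by rewrite big1 // => i _; rewrite !mxE leqnn subnn expr0.
Qed.

Lemma A2 : \det (1%:M - 'X *: PA) = 1 - 'X ^+ n.
Proof.
have := det_mulmx (1%:M - 'X *: PA) UA; rewrite detUA mulr1 => <-.
rewrite mulmxBl mul1mx -scalemxAl /PA -row_permE.
rewrite det_trig; last first.
  apply/is_trig_mxP => i j ij; rewrite !mxE sAE.
  have iN : (i < N)%N by move: (ltn_ord j) ij; lia.
  rewrite modn_small; last by lia.
  rewrite (ltnW ij) ij; case E: (j - i)%N => [|k]; first by move: E ij; lia.
  rewrite (_ : (j - i.+1 = k)%N); last lia.
  by rewrite exprS subrr.
rewrite big_ord_recr /= big1 ?mul1r; last first.
  move=> i _; rewrite !mxE sAE /= modn_small; last by rewrite ltnS ltn_ord.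
  by rewrite leqnn subnn expr0 ltnn mulr0 subr0.
rewrite !mxE sAE /= modnn leqnn subnn expr0 leq0n subn0 -exprS.
by [].
Qed.

Lemma famA : Dq n (ce (aff_edges (TA N))) = (1 - 'X ^+ n) ^+ 2.
Proof.
rewrite /Dq A1 det_mulmx A2.
have -> : 1%:M - 'X *: PA^T = (1%:M - 'X *: PA)^T.
  by apply/matrixP => i j; rewrite !mxE eq_sym.
by rewrite det_tr A2 expr2.
Qed.
End CycA.

Unset Implicit Arguments.

Theorem mainTheorem3 (X : ctype) : admissible X ->
  \det (qCaff X) * (1 - 'X ^+ 2) =
  (1 - 'X ^+ (pqr2 X).1.1) * (1 - 'X ^+ (pqr2 X).1.2) * (1 - 'X ^+ (pqr2 X).2)
  :> {poly int}.
Proof.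
rewrite qCaff_Dq; case: X => [l|l||||l|l||] /= adm.
- rewrite famA; ring.
- exact: famD.
- tdet_rw 7%N (ce (aff_edges TE6)); rewrite /=; ring.
- tdet_rw 8%N (ce (aff_edges TE7)); rewrite /=; ring.
- tdet_rw 9%N (ce (aff_edges TE8)); rewrite /=; ring.
- exact: famC.
- exact: famB.
- tdet_rw 5%N (ce (aff_edges TF4)); rewrite /=; ring.
- tdet_rw 3%N (ce (aff_edges TG2)); rewrite /=; ring.
Qed.
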